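(* Each of the following systems has an isochronous center at the origin $O$ with zero Urabe function: (i) for every $a\in\mathbb R$: $\dot x=-y+axy+x^2-ax^3$, $\dot y=x+4ay^2-2xy-\frac32ax^2-6ax^2y+(2+a^2)x^3+\left(2a-\frac14a^3\right)x^4$; (ii) for every $a\in\mathbb R$: $\dot x=-y+axy+x^2-ax^3$, $\dot y=x+3ay^2-2xy-ax^2-4ax^2y+\left(\frac13a^2+2\right)x^3+ax^4$; (iii) for $\beta=\pm\sqrt3$: $\dot x=-y+2\beta xy+x^2-2\beta x^3$, $\dot y=x+8\beta y^2-2xy-3\beta x^2-12\beta x^2y+14x^3-2\beta x^4$; (iv) for $\alpha=\pm\sqrt2$: $\dot x=-y+\alpha xy+x^2-\frac43\alpha x^3+\frac23x^4$, $\dot y=x+6\alpha y^2-2xy-\frac52\alpha x^2-9\alpha x^2y+\frac{26}{3}x^3+6x^3y-\frac83\alpha x^4$; (v) for $\alpha=\pm\sqrt2$: $\dot x=-y+\alpha xy+x^2-\frac43\alpha x^3+\frac23x^4$, $\dot y=x+3\alpha y^2-2xy-\alpha x^2-3\alpha x^2y+\frac83x^3+2x^3y-\frac23\alpha x^4$.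
   Context: For a real planar polynomial system $\dot x=-y+A(x,y)$, $\dot y=x+B(x,y)$, with $A,B$ polynomials having no terms of degree $<2$, the origin $O$ is an isochronous center if there is a punctured neighborhood of $O$ in which every orbit is a closed orbit surrounding $O$ and all these orbits have the same period. Zero Urabe function: write the system as $\dot x=p_0(x)+p_1(x)y$, $\dot y=q_0(x)+q_1(x)y+q_2(x)y^2$ ($p_0(0)=q_0(0)=0$, $p_1(0)\ne0$), where it holds that $-\frac{p_1'p_0}{p_1}+q_1+p_0'-\frac{2q_2p_0}{p_1}\equiv0$. Put $f=-\frac{q_2+p_1'}{p_1}$, $g=-\frac{q_2p_0^2}{p_1}+q_1p_0-p_1q_0$ (the change $z=p_0+p_1y$ gives $\dot x=z$, $\dot z=-g(x)-f(x)z^2$), $F(x)=\int_0^xf$, and $\xi$ near $0$ by $\frac12\xi(x)^2=\int_0^xg(s)e^{2F(s)}ds$, $x\xi(x)>0$ for $x\ne0$. The Urabe function of an isochronous center is the odd analytic $h$ with $\frac{\xi(x)}{1+h(\xi(x))}=g(x)e^{F(x)}$; ''zero Urabe function'' means $h\equiv0$, i.e. $\xi(x)=g(x)e^{F(x)}$ near $0$. *)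

(* Defs.v *)
From Stdlib Require Import Reals Lra.
Open Scope R_scope.

Definition is_solution (P Q : R -> R -> R) (x y : R -> R) : Prop :=
  forall t, derivable_pt_lim x t (P (x t) (y t)) /\
            derivable_pt_lim y t (Q (x t) (y t)).

(* The closed curve t |-> (x t, y t), t in [0,T], surrounds the origin:
   it avoids O and has nonzero winding number about O (measured by a
   continuous polar angle). *)
Definition surrounds_origin (x y : R -> R) (T : R) : Prop :=
  (forall t, 0 < x t ^ 2 + y t ^ 2) /\
  exists theta : R -> R,
    (forall t, continuity_pt theta t) /\
    (forall t, x t = sqrt (x t ^ 2 + y t ^ 2) * cos (theta t) /\
               y t = sqrt (x t ^ 2 + y t ^ 2) * sin (theta t)) /\
    theta T - theta 0 <> 0.

Definition isochronous_center (P Q : R -> R -> R) : Prop :=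
  exists r T : R, 0 < r /\ 0 < T /\
  forall x0 y0 : R, 0 < x0 ^ 2 + y0 ^ 2 < r ^ 2 ->
    exists x y : R -> R,
      is_solution P Q x y /\ x 0 = x0 /\ y 0 = y0 /\
      (forall t, x (t + T) = x t /\ y (t + T) = y t) /\
      (forall s, 0 < s < T -> ~ (x s = x0 /\ y s = y0)) /\
      surrounds_origin x y T.

(* Zero Urabe function, following the paper's construction:
   P = p0(x) + p1(x) y, Q = q0(x) + q1(x) y + q2(x) y^2, with
   p0(0)=q0(0)=0, p1(0)<>0 and the compatibility identity; then
   f = -(q2+p1')/p1, g = -q2 p0^2/p1 + q1 p0 - p1 q0, F(x) = int_0^x f,
   xi given by xi^2/2 = int_0^x g e^{2F}, x xi(x) > 0 (x<>0),
   and the Urabe function is zero iff xi(x) = g(x) e^{F(x)} near 0.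
   The integrals are represented by their (unique) antiderivatives
   vanishing at 0. *)
Definition zero_urabe (P Q : R -> R -> R) : Prop :=
  exists p0 p1 q0 q1 q2 dp0 dp1 : R -> R,
    (forall x y, P x y = p0 x + p1 x * y) /\
    (forall x y, Q x y = q0 x + q1 x * y + q2 x * y ^ 2) /\
    (forall x, derivable_pt_lim p0 x (dp0 x)) /\
    (forall x, derivable_pt_lim p1 x (dp1 x)) /\
    p0 0 = 0 /\ q0 0 = 0 /\ p1 0 <> 0 /\
    let f := fun x => - (q2 x + dp1 x) / p1 x in
    let g := fun x => - (q2 x * p0 x ^ 2) / p1 x + q1 x * p0 x - p1 x * q0 x in
    exists delta : R, 0 < delta /\
      (forall x, Rabs x < delta -> p1 x <> 0 /\
         - (dp1 x * p0 x) / p1 x + q1 x + dp0 x - 2 * q2 x * p0 x / p1 x = 0) /\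
      exists F H : R -> R,
        F 0 = 0 /\ H 0 = 0 /\
        (forall x, Rabs x < delta -> derivable_pt_lim F x (f x)) /\
        (forall x, Rabs x < delta -> derivable_pt_lim H x (g x * exp (2 * F x))) /\
        (forall x, Rabs x < delta ->
           / 2 * (g x * exp (F x)) ^ 2 = H x /\
           (x <> 0 -> 0 < x * (g x * exp (F x)))).

Definition isochronous_zero_urabe (P Q : R -> R -> R) : Prop :=
  isochronous_center P Q /\ zero_urabe P Q.

Definition P1 (a : R) (x y : R) : R := - y + a * x * y + x ^ 2 - a * x ^ 3.
Definition Q1 (a : R) (x y : R) : R :=
  x + 4 * a * y ^ 2 - 2 * x * y - 3 / 2 * a * x ^ 2 - 6 * a * x ^ 2 * y
  + (2 + a ^ 2) * x ^ 3 + (2 * a - 1 / 4 * a ^ 3) * x ^ 4.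

Definition P2 (a : R) (x y : R) : R := - y + a * x * y + x ^ 2 - a * x ^ 3.
Definition Q2 (a : R) (x y : R) : R :=
  x + 3 * a * y ^ 2 - 2 * x * y - a * x ^ 2 - 4 * a * x ^ 2 * y
  + (1 / 3 * a ^ 2 + 2) * x ^ 3 + a * x ^ 4.

Definition P3 (b : R) (x y : R) : R := - y + 2 * b * x * y + x ^ 2 - 2 * b * x ^ 3.
Definition Q3 (b : R) (x y : R) : R :=
  x + 8 * b * y ^ 2 - 2 * x * y - 3 * b * x ^ 2 - 12 * b * x ^ 2 * y
  + 14 * x ^ 3 - 2 * b * x ^ 4.

Definition P4 (al : R) (x y : R) : R :=
  - y + al * x * y + x ^ 2 - 4 / 3 * al * x ^ 3 + 2 / 3 * x ^ 4.
Definition Q4 (al : R) (x y : R) : R :=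
  x + 6 * al * y ^ 2 - 2 * x * y - 5 / 2 * al * x ^ 2 - 9 * al * x ^ 2 * y
  + 26 / 3 * x ^ 3 + 6 * x ^ 3 * y - 8 / 3 * al * x ^ 4.

Definition P5 (al : R) (x y : R) : R :=
  - y + al * x * y + x ^ 2 - 4 / 3 * al * x ^ 3 + 2 / 3 * x ^ 4.
Definition Q5 (al : R) (x y : R) : R :=
  x + 3 * al * y ^ 2 - 2 * x * y - al * x ^ 2 - 3 * al * x ^ 2 * y
  + 8 / 3 * x ^ 3 + 2 * x ^ 3 * y - 2 / 3 * al * x ^ 4.

(* Main.v *)
Require Import Defs.
From Stdlib Require Import Reals Lra Psatz Lia.
Open Scope R_scope.

Notation Dpl := derivable_pt_lim.

Lemma D_eq f x l1 l2 : Dpl f x l1 -> l1 = l2 -> Dpl f x l2.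
Proof. intros H ->; exact H. Qed.
Lemma D_const (c x : R) : Dpl (fun _ => c) x 0.
Proof. apply derivable_pt_lim_const. Qed.
Lemma D_id x : Dpl (fun y => y) x 1.
Proof. apply derivable_pt_lim_id. Qed.
Lemma D_plus f g x a b : Dpl f x a -> Dpl g x b -> Dpl (fun y => f y + g y) x (a + b).
Proof. intros; apply (derivable_pt_lim_plus f g); auto. Qed.
Lemma D_minus f g x a b : Dpl f x a -> Dpl g x b -> Dpl (fun y => f y - g y) x (a - b).
Proof. intros; apply (derivable_pt_lim_minus f g); auto. Qed.
Lemma D_mult f g x a b : Dpl f x a -> Dpl g x b -> Dpl (fun y => f y * g y) x (a * g x + f x * b).
Proof. intros. eapply D_eq. apply (derivable_pt_lim_mult f g); eauto. ring. Qed.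
Lemma D_opp f x a : Dpl f x a -> Dpl (fun y => - f y) x (- a).
Proof. intros; apply (derivable_pt_lim_opp f); auto. Qed.
Lemma D_pow f n x a : Dpl f x a -> Dpl (fun y => f y ^ n) x (INR n * f x ^ pred n * a).
Proof. intros H. eapply D_eq.
  apply (derivable_pt_lim_comp f (fun y => y ^ n) x a (INR n * f x ^ pred n)); [exact H | apply derivable_pt_lim_pow]. unfold comp; ring. Qed.
Lemma D_div f g x a b : Dpl f x a -> Dpl g x b -> g x <> 0 ->
  Dpl (fun y => f y / g y) x ((a * g x - b * f x) / (g x) ^ 2).
Proof. intros. eapply D_eq. exact (derivable_pt_lim_div f g x a b H H0 H1). unfold Rsqr; field; auto. Qed.
Lemma D_inv g x b : Dpl g x b -> g x <> 0 -> Dpl (fun y => / g y) x (- b / (g x) ^ 2).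
Proof. intros. eapply D_eq. 2: reflexivity. assert (E: Dpl (fun y => 1 / g y) x ((0 * g x - b * 1) / g x ^ 2)) by exact (D_div (fun _ => 1) g x 0 b (D_const 1 x) H H0).
  replace (- b / g x ^ 2) with ((0 * g x - b * 1) / g x ^ 2) by (field; auto).
  intros e He; destruct (E e He) as [d Hd]; exists d; intros h H1 H2; specialize (Hd h H1 H2).
  unfold Rdiv in *; rewrite !Rmult_1_l in Hd; exact Hd. Qed.
Lemma D_ln f x a : Dpl f x a -> 0 < f x -> Dpl (fun y => ln (f y)) x (a / f x).
Proof. intros. eapply D_eq. exact (derivable_pt_lim_comp f ln x a _ H (derivable_pt_lim_ln _ H0)).
 unfold Rdiv; ring. Qed.
Lemma D_exp f x a : Dpl f x a -> Dpl (fun y => exp (f y)) x (exp (f x) * a).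
Proof. intros. eapply D_eq. exact (derivable_pt_lim_comp f exp x a _ H (derivable_pt_lim_exp _)). ring. Qed.
Lemma D_cos f x a : Dpl f x a -> Dpl (fun y => cos (f y)) x (- sin (f x) * a).
Proof. intros. eapply D_eq. exact (derivable_pt_lim_comp f cos x a _ H (derivable_pt_lim_cos _)). ring. Qed.
Lemma D_sin f x a : Dpl f x a -> Dpl (fun y => sin (f y)) x (cos (f x) * a).
Proof. intros. eapply D_eq. exact (derivable_pt_lim_comp f sin x a _ H (derivable_pt_lim_sin _)). ring. Qed.
Lemma D_Rpower f e x a : Dpl f x a -> 0 < f x ->
  Dpl (fun y => Rpower (f y) e) x (e * Rpower (f x) (e - 1) * a).
Proof. intros. eapply D_eq. exact (derivable_pt_lim_comp f (fun y => Rpower y e) x a _ H (derivable_pt_lim_power _ e H0)). ring. Qed.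

Lemma D_comp g F x a b : Dpl g x a -> Dpl F (g x) b -> Dpl (fun y => F (g y)) x (b * a).
Proof. intros H1 H2. exact (derivable_pt_lim_comp g F x a b H1 H2). Qed.
Lemma D_atan f x a : Dpl f x a -> Dpl (fun y => atan (f y)) x (/ (1 + f x ^ 2) * a).
Proof. intros. eapply D_eq. exact (derivable_pt_lim_comp f atan x a _ H (derivable_pt_lim_atan _)). unfold Rsqr; simpl; ring_simplify. reflexivity. Qed.

Ltac D := match goal with
 | |- Dpl (fun y => ?c) _ _ => apply D_const
 | |- Dpl (fun y => y) _ _ => apply D_id
 | |- Dpl (fun y => @?f y + @?g y) _ _ => apply (D_plus f g); D
 | |- Dpl (fun y => @?f y - @?g y) _ _ => apply (D_minus f g); D
 | |- Dpl (fun y => @?f y * @?g y) _ _ => apply (D_mult f g); D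
 | |- Dpl (fun y => @?f y / @?g y) _ _ => apply (D_div f g); D
 | |- Dpl (fun y => - @?f y) _ _ => apply (D_opp f); D
 | |- Dpl (fun y => / @?f y) _ _ => apply (D_inv f); D
 | |- Dpl (fun y => @?f y ^ ?n) _ _ => apply (D_pow f n); D
 | |- Dpl (fun y => ln (@?f y)) _ _ => apply (D_ln f); D
 | |- Dpl (fun y => exp (@?f y)) _ _ => apply (D_exp f); D
 | |- Dpl (fun y => cos (@?f y)) _ _ => apply (D_cos f); D
 | |- Dpl (fun y => sin (@?f y)) _ _ => apply (D_sin f); D
 | |- Dpl (fun y => atan (@?f y)) _ _ => apply (D_atan f); D
 | |- Dpl (fun y => Rpower (@?f y) ?e) _ _ => apply (D_Rpower f e); D
 | |- Dpl (fun y => ?F (@?g y)) _ _ => apply (D_comp g F); [D | idtac]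
 | |- _ => idtac
 end.

Lemma exp1_gt2 : 2 < exp 1.
Proof. pose proof (exp_ineq1 1). lra. Qed.

Lemma Xex (k : R) (n : nat) : (2 <= n)%nat ->
  exists c0 X, 0 < c0 /\ X 0 = 0 /\
   forall u, Rabs u < c0 -> Dpl X u ((1 - k * X u) ^ n) /\ /3 <= 1 - k * X u <= 3.
Proof.
  intros Hn.
  assert (HN : 2 <= INR n) by (replace 2 with (INR 2) by (simpl; ring); apply le_INR; auto).
  destruct (Req_dec k 0) as [Hk|Hk].
  - subst k. exists 1, (fun u => u). split; [lra|split; [reflexivity|]].
    intros u _. split. eapply D_eq. apply D_id. rewrite Rmult_0_l, Rminus_0_r, pow1. reflexivity. lra.
  - set (N := INR n) in *. set (e := - / (N - 1)).
    set (b := fun u => 1 + k * (N - 1) * u).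
    exists (/ (2 * (Rabs k * (N - 1) + 1))), (fun u => (1 - Rpower (b u) e) / k).
    assert (HkN: 0 <= Rabs k * (N - 1)). { apply Rmult_le_pos. apply Rabs_pos. lra. }
    split. apply Rinv_0_lt_compat. lra.
    split. unfold b. rewrite Rmult_0_r, Rplus_0_r. unfold Rpower. rewrite ln_1, Rmult_0_r, exp_0. field; auto.
    intros u Hu.
    assert (Hb : /2 < b u < 3/2).
    { unfold b. assert (Rabs (k * (N-1) * u) < /2).
      { rewrite !Rabs_mult. rewrite (Rabs_right (N-1)) by lra.
        assert (H2 : Rabs u * (2 * (Rabs k * (N - 1) + 1)) < 1).
        { apply (Rmult_lt_compat_r (2 * (Rabs k * (N - 1) + 1))) in Hu; [|lra].
          rewrite Rinv_l in Hu; lra. }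
        pose proof (Rabs_pos u). nra. }
      apply Rabs_def2 in H. lra. }
    assert (HW : 1 - k * ((1 - Rpower (b u) e) / k) = Rpower (b u) e) by (field; auto).
    rewrite HW. split.
    + eapply D_eq. unfold b. D. unfold b in Hb; lra. auto.
      fold (b u). unfold N in *.
      replace (e - 1) with (e * INR n) by (unfold e; field; lra).
      rewrite <- Rpower_mult. rewrite Rpower_pow by (unfold Rpower; apply exp_pos).
      unfold e; field. split; auto. lra.
    + assert (He : -1 <= e < 0).
      { unfold e. assert (0 < /(N-1) <= 1). split. apply Rinv_0_lt_compat; lra.
        rewrite <- Rinv_1. apply Rinv_le_contravar; lra. lra. }
      assert (Hl : -1 < ln (b u) < 1).
      { pose proof exp1_gt2. split.
        - rewrite <- (ln_exp (-1)). apply ln_increasing. apply exp_pos.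
          replace (exp (-1)) with (/ exp 1) by (rewrite <- exp_Ropp; f_equal; ring). apply Rlt_trans with (/2). apply Rinv_lt_contravar; lra. lra.
        - rewrite <- (ln_exp 1). apply ln_increasing; lra. }
      assert (Hel : -1 <= e * ln (b u) <= 1).
      { split; nra. }
      unfold Rpower. pose proof exp_le_3. split.
      * apply Rle_trans with (exp (-1)). replace (exp (-1)) with (/ exp 1) by (rewrite <- exp_Ropp; f_equal; ring). apply Rinv_le_contravar. apply exp_pos. auto.
        destruct (Rle_lt_or_eq_dec _ _ (proj1 Hel)) as [h|h]. left; apply exp_increasing; auto. rewrite h; lra.
      * apply Rle_trans with (exp 1); auto.
        destruct (Rle_lt_or_eq_dec _ _ (proj2 Hel)) as [h|h]. left; apply exp_increasing; auto. rewrite h; lra.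
Qed.

Lemma mvt_in f f' c a b : (forall u, Rabs u < c -> Dpl f u (f' u)) ->
  Rabs a < c -> Rabs b < c -> a < b -> exists t, Rabs t < c /\ f b - f a = f' t * (b - a).
Proof.
  intros H Ha Hb Hab. destruct (MVT_cor2 f f' a b Hab) as [t [Ht1 Ht2]].
  - intros t Ht. apply H. apply Rabs_def2 in Ha. apply Rabs_def2 in Hb. apply Rabs_def1; lra.
  - exists t. split; auto. apply Rabs_def2 in Ha. apply Rabs_def2 in Hb. apply Rabs_def1; lra.
Qed.

Lemma mvt_zero f f' c u : f 0 = 0 -> (forall u, Rabs u < c -> Dpl f u (f' u)) ->
  Rabs u < c -> exists t, Rabs t < c /\ f u = f' t * u.
Proof.
  intros H0 H Hu. assert (Hc : 0 < c) by (pose proof (Rabs_pos u); lra).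
  destruct (Rtotal_order u 0) as [h|[h|h]].
  - destruct (mvt_in f f' c u 0 H Hu) as [t [Ht E]]; [rewrite Rabs_R0; auto|auto|].
    exists t; split; auto. rewrite H0 in E. lra.
  - subst u. exists 0. split. rewrite Rabs_R0; auto. rewrite H0; ring.
  - destruct (mvt_in f f' c 0 u H) as [t [Ht E]]; [rewrite Rabs_R0; auto|auto|auto|].
    exists t; split; auto. rewrite H0 in E. lra.
Qed.

Lemma polar a b : 0 < a ^ 2 + b ^ 2 ->
  exists phi, a = sqrt (a ^ 2 + b ^ 2) * cos phi /\ b = sqrt (a ^ 2 + b ^ 2) * sin phi.
Proof.
  intros H. set (r := sqrt (a ^ 2 + b ^ 2)).
  assert (Hr : 0 < r) by (apply sqrt_lt_R0; auto).
  assert (Hr2 : r ^ 2 = a ^ 2 + b ^ 2) by (unfold r; rewrite <- Rsqr_pow2; apply Rsqr_sqrt; lra).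
  assert (Hab : -1 <= a / r <= 1).
  { assert ((a/r)^2 <= 1). { replace ((a/r)^2) with (a^2 / r^2) by (field; lra). rewrite Hr2.
      apply (Rmult_le_reg_r (a^2+b^2)); auto. unfold Rdiv. rewrite Rmult_assoc, Rinv_l by lra. nra. }
    nra. }
  assert (Hs : 1 - (a / r)² = (b / r) ^ 2).
  { unfold Rsqr. apply (Rmult_eq_reg_r (r^2)); [|nra]. field_simplify; try lra. }
  destruct (Rle_or_lt 0 b) as [hb|hb].
  - exists (acos (a / r)). rewrite cos_acos, sin_acos by auto. rewrite Hs.
    rewrite sqrt_pow2. split; field; lra. unfold Rdiv; apply Rmult_le_pos; [lra| left; apply Rinv_0_lt_compat; lra].
  - exists (- acos (a / r)). rewrite cos_neg, sin_neg, cos_acos, sin_acos by auto. rewrite Hs.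
    replace ((b/r)^2) with ((-b/r)^2) by (field; lra).
    rewrite sqrt_pow2. split; field; lra. unfold Rdiv; apply Rmult_le_pos; [lra| left; apply Rinv_0_lt_compat; lra].
Qed.

Lemma cos_not1 s : 0 < s < 2 * PI -> cos s <> 1.
Proof.
  intros Hs. replace s with (2 * (s / 2)) by field. rewrite cos_2a_sin.
  assert (0 < sin (s/2)) by (apply sin_gt_0; lra). nra.
Qed.

Lemma polar_rel x y s : 0 < x * cos s + y * sin s ->
  let A := x * cos s + y * sin s in let B := - x * sin s + y * cos s in
  x = sqrt (x ^ 2 + y ^ 2) * cos (s + atan (B / A)) /\
  y = sqrt (x ^ 2 + y ^ 2) * sin (s + atan (B / A)).
Proof.
  intros HA A B. fold A in HA.
  set (w := B / A). set (Rw := sqrt (1 + w²)).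
  assert (HR : 0 < Rw) by (apply sqrt_lt_R0; pose proof (Rle_0_sqr w); lra).
  assert (Hsc := sin2_cos2 s). unfold Rsqr in Hsc.
  assert (E : sqrt (x ^ 2 + y ^ 2) = A * Rw).
  { unfold Rw. rewrite <- (sqrt_pow2 A) by lra. rewrite <- sqrt_mult.
    2: apply pow2_ge_0. 2: pose proof (Rle_0_sqr w); lra.
    f_equal. unfold w, Rsqr. replace (A^2 * (1 + B/A*(B/A))) with (A^2 + B^2) by (field; lra).
    unfold A, B. nra. }
  rewrite E, cos_plus, sin_plus, cos_atan, sin_atan. fold Rw.
  split.
  - replace (A * Rw * (cos s * (1 / Rw) - sin s * (w / Rw))) with (A * cos s - B * sin s) by (unfold w; field; lra).
    unfold A, B. rewrite <- (Rmult_1_r x) at 1. rewrite <- Hsc. ring.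
  - replace (A * Rw * (sin s * (1 / Rw) + cos s * (w / Rw))) with (A * sin s + B * cos s) by (unfold w; field; lra).
    unfold A, B. rewrite <- (Rmult_1_r y) at 1. rewrite <- Hsc. ring.
Qed.

Definition gfun (k m : R) (p0 q0 q1 : R -> R) (x : R) : R :=
  - (m * p0 x ^ 2) / (k * x - 1) + q1 x * p0 x - (k * x - 1) * q0 x.
Definition xif (k m : R) (n : nat) (p0 q0 q1 : R -> R) (x : R) : R :=
  gfun k m p0 q0 q1 x / (1 - k * x) ^ n.

Lemma Dpl_cont f x l : Dpl f x l -> continuity_pt f x.
Proof. intros H. apply (derivable_continuous_pt f x (exist _ l H)). Qed.

Lemma abs_lt_sq a r : 0 < r -> a ^ 2 < r ^ 2 -> Rabs a < r.
Proof. intros Hr H. unfold Rabs; destruct (Rcase_abs a); nra. Qed.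

Ltac unlet := repeat match goal with | x := ?b |- _ => let H := fresh "Edef" in assert (H : x = b) by reflexivity; clearbody x end.

Lemma alg (k m N x p0x dpx q0x q1x Wp co si rho : R) :
 1 - k * x <> 0 -> Wp <> 0 -> N * k = m + k ->
 - (k * p0x) / (k * x - 1) + q1x + dpx - 2 * m * p0x / (k * x - 1) = 0 ->
 (- (m * p0x ^ 2) / (k * x - 1) + q1x * p0x - (k * x - 1) * q0x) / ((1 - k * x) * Wp) = rho * co ->
 (((0 * si + - rho * (co * (1 + 0))) * ((1 - k * x) * Wp) +
   - rho * si * (N * Wp * (0 - (0 * x + k * (- rho * si * ((1 - k * x) * Wp) * 1)))) -
   dpx * (- rho * si * ((1 - k * x) * Wp) * 1)) * (k * x - 1) -
  (0 * x + k * (- rho * si * ((1 - k * x) * Wp) * 1) - 0) * (- rho * si * ((1 - k * x) * Wp) - p0x)) / (k * x - 1) ^ 2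
 = q0x + q1x * ((- rho * si * ((1 - k * x) * Wp) - p0x) / (k * x - 1)) + m * ((- rho * si * ((1 - k * x) * Wp) - p0x) / (k * x - 1)) ^ 2.
Proof.
  intros HW0 HWp Hnk Hc Hg.
  assert (Hx : k * x - 1 <> 0) by lra.
  assert (Hq1 : q1x = (k * p0x) / (k * x - 1) + 2 * m * p0x / (k * x - 1) - dpx).
  { unfold Rdiv in *. lra. }
  assert (Hq0 : q0x = (- (m * p0x ^ 2) / (k * x - 1) + q1x * p0x - rho * co * ((1 - k * x) * Wp)) / (k * x - 1)).
  { assert (Hg' : - (m * p0x ^ 2) / (k * x - 1) + q1x * p0x - (k * x - 1) * q0x = rho * co * ((1 - k * x) * Wp)).
    { rewrite <- Hg. field. split; auto. }
    rewrite <- Hg'. field. auto. }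
  rewrite Hq0, Hq1. replace m with (N * k - k) by lra. field. auto.
Qed.

Ltac unlet2 := unlet; repeat match goal with H : @eq (R -> R) _ _ |- _ => clear H end.
Ltac clean := repeat match goal with
 | H : ?T |- _ => lazymatch type of T with Prop =>
     lazymatch T with
     | @eq R _ _ => fail | Rle _ _ => fail | Rlt _ _ => fail | Rge _ _ => fail | Rgt _ _ => fail
     | _ /\ _ => fail | ~ _ => fail
     | _ => clear H end end end.
Ltac lra_ := unlet2; clean; lra.
Ltac nra_ := unlet2; clean; nra.

Section Gen.
Variables (P Q : R -> R -> R) (k m : R) (n : nat) (p0 dp0 q0 q1 : R -> R) (Kp d0 : R).
Hypotheses (Hn : (2 <= n)%nat) (Hnk : INR n * k = m + k)
 (HP : forall x y, P x y = p0 x + (k * x - 1) * y)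
 (HQ : forall x y, Q x y = q0 x + q1 x * y + m * y ^ 2)
 (Hdp0 : forall x, Dpl p0 x (dp0 x)) (Hp00 : p0 0 = 0) (Hq00 : q0 0 = 0)
 (Hd0 : 0 < d0) (HKp : 0 < Kp)
 (Hcompat : forall x, Rabs x < d0 ->
    - (k * p0 x) / (k * x - 1) + q1 x + dp0 x - 2 * m * p0 x / (k * x - 1) = 0)
 (Hp0b : forall x, Rabs x < d0 -> Rabs (p0 x) <= Kp * x ^ 2)
 (Hxi : forall x, Rabs x < d0 -> Dpl (xif k m n p0 q0 q1) x (/ (1 - k * x) ^ n)).

Local Notation g := (gfun k m p0 q0 q1).
Local Notation xi := (xif k m n p0 q0 q1).

Definition dl := Rmin d0 (/ (2 * (Rabs k + 1))).

Lemma dl_pos : 0 < dl.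
Proof. unfold dl. apply Rmin_pos; auto. apply Rinv_0_lt_compat. pose proof (Rabs_pos k); lra. Qed.

Lemma dl_prop x : Rabs x < dl -> Rabs x < d0 /\ /2 <= 1 - k * x <= 3/2.
Proof.
  intros H. unfold dl in H. split. eapply Rlt_le_trans; [exact H| apply Rmin_l].
  assert (H2 : Rabs x < / (2 * (Rabs k + 1))) by (eapply Rlt_le_trans; [exact H| apply Rmin_r]).
  assert (Rabs (k * x) <= / 2).
  { rewrite Rabs_mult. pose proof (Rabs_pos k). pose proof (Rabs_pos x).
    apply (Rmult_lt_compat_r (2 * (Rabs k + 1))) in H2; [|lra]. rewrite Rinv_l in H2 by lra. nra. }
  apply Rabs_le_between' in H0 || (apply Rabs_def2b in H0) || idtac.
  unfold Rabs in H0; destruct (Rcase_abs (k*x)); lra.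
Qed.

Lemma W_pos x : Rabs x < dl -> 0 < 1 - k * x.
Proof. intros H; destruct (dl_prop x H); lra. Qed.

Lemma W_nz x : Rabs x < dl -> k * x - 1 <> 0.
Proof. intros H; pose proof (W_pos x H); lra. Qed.

Lemma g0 : g 0 = 0.
Proof. unfold gfun. rewrite Hp00, Hq00. replace (k * 0 - 1) with (-1) by ring. field. Qed.

Lemma xi0 : xi 0 = 0.
Proof. unfold xif. rewrite g0. unfold Rdiv; ring. Qed.

Lemma dxi_bounds x : Rabs x < dl -> (/ 2) ^ n <= / (1 - k * x) ^ n <= 2 ^ n.
Proof.
  intros H. destruct (dl_prop x H) as [_ HW].
  rewrite <- pow_inv. split; apply pow_incr; split.
  - left; apply Rinv_0_lt_compat; lra.
  - apply Rinv_le_contravar; lra.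
  - left; apply Rinv_0_lt_compat; lra.
  - rewrite <- (Rinv_inv 2). apply Rinv_le_contravar; lra.
Qed.

Lemma Hxi' x : Rabs x < dl -> Dpl xi x (/ (1 - k * x) ^ n).
Proof. intros H; apply Hxi, (dl_prop x H). Qed.

Lemma xi_inc a b : Rabs a < dl -> Rabs b < dl -> a < b -> xi a < xi b.
Proof.
  intros Ha Hb Hab.
  destruct (mvt_in xi (fun x => / (1 - k * x) ^ n) dl a b Hxi' Ha Hb Hab) as [t [Ht E]].
  pose proof (dxi_bounds t Ht). assert (0 < (/2) ^ n) by (apply pow_lt; lra). nra.
Qed.

Lemma xi_inj a b : Rabs a < dl -> Rabs b < dl -> xi a = xi b -> a = b.
Proof.
  intros Ha Hb E. destruct (Rtotal_order a b) as [h|[h|h]]; auto.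
  pose proof (xi_inc a b Ha Hb h); lra. pose proof (xi_inc b a Hb Ha h); lra.
Qed.

Lemma xi_lin x : Rabs x < dl -> Rabs (xi x) <= 2 ^ n * Rabs x.
Proof.
  intros H. destruct (mvt_zero xi (fun x => / (1 - k * x) ^ n) dl x xi0 Hxi' H) as [t [Ht E]].
  rewrite E, Rabs_mult. apply Rmult_le_compat_r. apply Rabs_pos.
  pose proof (dxi_bounds t Ht). assert (0 < (/2) ^ n) by (apply pow_lt; lra).
  rewrite Rabs_right; lra.
Qed.

Lemma xi_sign x : Rabs x < dl -> x <> 0 -> 0 < x * xi x.
Proof.
  intros H Hx. assert (H0 : Rabs 0 < dl) by (rewrite Rabs_R0; apply dl_pos).
  destruct (Rtotal_order x 0) as [h|[h|h]].
  - pose proof (xi_inc x 0 H H0 h). rewrite xi0 in H1. nra.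
  - contradiction.
  - pose proof (xi_inc 0 x H0 H h). rewrite xi0 in H1. nra.
Qed.


Lemma expF x : Rabs x < dl -> exp (- INR n * ln (1 - k * x)) = / (1 - k * x) ^ n.
Proof.
  intros H. pose proof (W_pos x H).
  rewrite Ropp_mult_distr_l_reverse, <- ln_pow by auto. rewrite exp_Ropp, exp_ln; auto.
  apply pow_lt; auto.
Qed.

Lemma zu : zero_urabe P Q.
Proof.
  exists p0, (fun x => k * x - 1), q0, q1, (fun _ => m), dp0, (fun _ => k).
  split. intros; apply HP. split. intros; apply HQ. split. auto.
  split. intros x. eapply D_eq. D. ring.
  split. auto. split. auto. split. lra.
  intros f gg. exists dl. split. apply dl_pos.
  split. intros x Hx. split. apply W_nz; auto. apply Hcompat, (dl_prop x Hx).
  exists (fun x => - INR n * ln (1 - k * x)), (fun x => / 2 * xi x ^ 2).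
  split. rewrite Rmult_0_r, Rminus_0_r, ln_1. ring.
  split. rewrite xi0. ring.
  split.
  { intros x Hx. pose proof (W_pos x Hx). eapply D_eq. D. auto.
    unfold f. rewrite <- Hnk. field. repeat split; lra. }
  split.
  { intros x Hx. pose proof (W_pos x Hx). eapply D_eq. D. apply Hxi'. auto.
    unfold gg. replace (2 * (- INR n * ln (1 - k * x))) with
       (- INR n * ln (1 - k * x) + - INR n * ln (1 - k * x)) by ring.
    rewrite exp_plus, expF by auto. unfold xif, gfun. simpl. field.
    repeat split; try lra. apply pow_nonzero; lra. }
  intros x Hx. rewrite expF by auto.
  replace (gg x * / (1 - k * x) ^ n) with (xi x) by reflexivity.
  split. reflexivity. intros; apply xi_sign; auto.
Qed.


Section WithX.
Variables (c0 : R) (X : R -> R).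
Hypotheses (Hc0 : 0 < c0) (HX0 : X 0 = 0)
  (HX : forall u, Rabs u < c0 -> Dpl X u ((1 - k * X u) ^ n) /\ /3 <= 1 - k * X u <= 3).

Lemma K3_ge1 : 1 <= 3 ^ n.
Proof. apply pow_R1_Rle; lra. Qed.
Lemma K3_ge2 : 2 ^ n <= 3 ^ n.
Proof. apply pow_incr; lra. Qed.

Lemma X_lin u : Rabs u < c0 -> / 3 ^ n * u ^ 2 <= X u * u /\ Rabs (X u) <= 3 ^ n * Rabs u.
Proof.
  intros Hu.
  destruct (mvt_zero X (fun u => (1 - k * X u) ^ n) c0 u HX0 (fun u h => proj1 (HX u h)) Hu) as [t [Ht E]].
  destruct (HX t Ht) as [_ Hb].
  assert (B1 : (/3) ^ n <= (1 - k * X t) ^ n) by (apply pow_incr; lra).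
  assert (B2 : (1 - k * X t) ^ n <= 3 ^ n) by (apply pow_incr; lra).
  rewrite pow_inv in B1. pose proof K3_ge1. assert (0 < / 3 ^ n) by (apply Rinv_0_lt_compat; lra).
  rewrite E. split. nra. rewrite Rabs_mult. rewrite (Rabs_right ((1 - k * X t) ^ n)) by lra.
  apply Rmult_le_compat_r; auto. apply Rabs_pos.
Qed.

Definition cc := Rmin c0 (Rmin (dl / (2 * 3 ^ n)) (/ (4 * Kp * (3 ^ n) ^ 3))).

Lemma cc_prop : 0 < cc /\ cc <= c0 /\ 3 ^ n * cc < dl /\ 4 * Kp * (3 ^ n) ^ 3 * cc <= 1.
Proof.
  pose proof K3_ge1. pose proof dl_pos.
  assert (0 < (3 ^ n) ^ 3) by (apply pow_lt; lra).
  assert (0 < 4 * Kp * (3 ^ n) ^ 3) by (apply Rmult_lt_0_compat; lra).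
  unfold cc. split; [|split; [|split]].
  - apply Rmin_pos; auto. apply Rmin_pos. apply Rdiv_lt_0_compat; lra. apply Rinv_0_lt_compat; lra.
  - apply Rmin_l.
  - apply Rle_lt_trans with (3 ^ n * (dl / (2 * 3 ^ n))).
    apply Rmult_le_compat_l. lra. eapply Rle_trans; [apply Rmin_r| apply Rmin_l].
    replace (3 ^ n * (dl / (2 * 3 ^ n))) with (dl / 2) by (field; lra). lra.
  - apply Rle_trans with (4 * Kp * (3 ^ n) ^ 3 * / (4 * Kp * (3 ^ n) ^ 3)).
    apply Rmult_le_compat_l. lra. eapply Rle_trans; [apply Rmin_r| apply Rmin_r].
    rewrite Rinv_r; lra.
Qed.

Lemma X_small u : Rabs u < cc -> Rabs (X u) < dl.
Proof.
  intros Hu. destruct cc_prop as [h1 [h2 [h3 h4]]].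
  destruct (X_lin u) as [_ H]. lra. pose proof K3_ge1. nra.
Qed.

Lemma xiX u : Rabs u < cc -> xi (X u) = u.
Proof.
  intros Hu. destruct cc_prop as [h1 [h2 [h3 h4]]].
  assert (E : forall v, Rabs v < cc -> Dpl (fun v => xi (X v) - v) v 0).
  { intros v Hv. pose proof (X_small v Hv). pose proof (W_pos _ H).
    eapply D_eq. D. apply (HX v). lra. apply Hxi'. auto.
    field. apply pow_nonzero. lra. }
  destruct (mvt_zero (fun v => xi (X v) - v) (fun _ => 0) cc u) as [t [_ Et]]; auto.
  rewrite HX0, xi0. ring. lra.
Qed.


Definition rr := Rmin 1 (Rmin dl (cc / (2 * 3 ^ n * (Kp + 3)))).

Lemma rr_prop : 0 < rr /\ rr <= 1 /\ rr <= dl /\ 3 ^ n * (Kp + 3) * rr < cc.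
Proof.
  destruct cc_prop as [h1 [h2 [h3 h4]]]. pose proof K3_ge1. pose proof dl_pos.
  assert (0 < 2 * 3 ^ n * (Kp + 3)) by (apply Rmult_lt_0_compat; lra).
  unfold rr. split; [|split; [|split]].
  - apply Rmin_pos. lra. apply Rmin_pos; auto. apply Rdiv_lt_0_compat; lra.
  - apply Rmin_l.
  - eapply Rle_trans; [apply Rmin_r| apply Rmin_l].
  - apply Rle_lt_trans with (3 ^ n * (Kp + 3) * (cc / (2 * 3 ^ n * (Kp + 3)))).
    apply Rmult_le_compat_l. nra. eapply Rle_trans; [apply Rmin_r| apply Rmin_r].
    replace (3 ^ n * (Kp + 3) * (cc / (2 * 3 ^ n * (Kp + 3)))) with (cc / 2) by (field; lra). lra.
Qed.


Lemma iso : isochronous_center P Q.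
Proof.
  destruct cc_prop as [hc1 [hc2 [hc3 hc4]]]. destruct rr_prop as [hr1 [hr2 [hr3 hr4]]].
  pose proof K3_ge1 as HK. pose proof K3_ge2 as HK2. pose proof dl_pos as Hdl.
  exists rr, (2 * PI). split; auto. split. pose proof PI_RGT_0; lra_.
  intros x0 y0 [H0 Hr].
  assert (Hx0 : Rabs x0 < rr) by (apply abs_lt_sq; auto; nra_).
  assert (Hy0 : Rabs y0 < rr) by (apply abs_lt_sq; auto; nra_).
  assert (Hx0d : Rabs x0 < dl) by lra_.
  set (u0 := xi x0). set (z0 := P x0 y0). set (W0 := 1 - k * x0).
  pose proof (W_pos x0 Hx0d) as HW0. destruct (dl_prop x0 Hx0d) as [Hx0d0 HW0b].
  set (v0 := z0 / W0 ^ n).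
  assert (Hu0 : Rabs u0 <= 3 ^ n * rr).
  { unfold u0. eapply Rle_trans. apply xi_lin; auto. pose proof (Rabs_pos x0).
    pose proof (pow_le 2 n ltac:(lra_)). nra_. }
  assert (Hz0 : Rabs z0 <= (Kp + 2) * rr).
  { unfold z0. rewrite HP. eapply Rle_trans. apply Rabs_triang.
    pose proof (Hp0b x0 Hx0d0). rewrite Rabs_mult.
    replace (Rabs (k * x0 - 1)) with W0 by (unfold W0; rewrite Rabs_minus_sym; rewrite Rabs_right; lra_).
    pose proof (Rabs_pos x0). pose proof (Rabs_pos y0).
    assert (x0 ^ 2 <= rr). { rewrite <- (Rabs_pow2 x0) || idtac. replace (x0 ^ 2) with (Rabs x0 * Rabs x0).
      nra_. rewrite <- Rabs_mult. rewrite Rabs_right. ring. nra_. }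
    nra_. }
  assert (Hv0 : Rabs v0 <= 3 ^ n * ((Kp + 2) * rr)).
  { unfold v0. unfold Rdiv. rewrite Rabs_mult. rewrite (Rabs_right (/ W0 ^ n)).
    2: { left; apply Rinv_0_lt_compat, pow_lt; lra_. }
    destruct (dxi_bounds x0 Hx0d) as [_ Hb]. fold W0 in Hb. pose proof (Rabs_pos z0).
    assert (0 <= / W0 ^ n) by (left; apply Rinv_0_lt_compat, pow_lt; lra_).
    apply Rle_trans with (Rabs z0 * 3 ^ n). apply Rmult_le_compat_l; lra_. nra_. }
  set (rho := sqrt (u0 ^ 2 + (- v0) ^ 2)).
  assert (Hrho_c : rho < cc).
  { apply Rle_lt_trans with (Rabs u0 + Rabs v0).
    unfold rho. rewrite <- (sqrt_pow2 (Rabs u0 + Rabs v0)) by (pose proof (Rabs_pos u0); pose proof (Rabs_pos v0); lra_).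
    apply sqrt_le_1_alt. rewrite <- (Rabs_pow2 u0) || idtac.
    pose proof (Rabs_pos u0); pose proof (Rabs_pos v0).
    replace (u0 ^ 2 + (- v0) ^ 2) with (Rabs u0 ^ 2 + Rabs v0 ^ 2). nra_.
    rewrite <- !Rsqr_pow2, <- (Rsqr_abs u0), <- (Rsqr_abs v0). unfold Rsqr; ring.
    nra_. }
  assert (Hpos : 0 < u0 ^ 2 + (- v0) ^ 2).
  { destruct (Req_dec u0 0) as [hu|hu]; [|nra_].
    destruct (Req_dec v0 0) as [hv|hv]; [|nra_].
    exfalso. assert (Ex0 : x0 = 0). { apply xi_inj; auto. rewrite Rabs_R0; auto. fold u0. rewrite hu, xi0; auto. }
    assert (Ez0 : z0 = 0). { unfold v0 in hv. apply (Rmult_eq_reg_r (/ W0 ^ n)). rewrite Rmult_0_l. exact hv.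
      apply Rinv_neq_0_compat, pow_nonzero; lra_. }
    unfold z0 in Ez0. rewrite HP, Ex0, Hp00 in Ez0. assert (Ey : y0 = 0) by lra_.
    rewrite Ex0, Ey in H0. lra_. }
  destruct (polar u0 (- v0) Hpos) as [phi [Hphi1 Hphi2]]. fold rho in Hphi1, Hphi2.
  assert (Hrho : 0 < rho) by (apply sqrt_lt_R0; auto).
  set (xt := fun t => X (rho * cos (t + phi))).
  set (Zt := fun t => - rho * sin (t + phi) * (1 - k * xt t) ^ n).
  set (yt := fun t => (Zt t - p0 (xt t)) / (k * xt t - 1)).
  assert (Hut : forall t, Rabs (rho * cos (t + phi)) < cc).
  { intros t. rewrite Rabs_mult, (Rabs_right rho) by lra_.
    assert (Rabs (cos (t + phi)) <= 1) by (apply Rabs_le; apply COS_bound). pose proof (Rabs_pos (cos (t+phi))). nra_. }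
  assert (Hxt : forall t, Rabs (xt t) < dl) by (intros; apply X_small; auto).
  assert (Hxit : forall t, xi (xt t) = rho * cos (t + phi)) by (intros; apply xiX; auto).
  assert (HWt : forall t, / 2 <= 1 - k * xt t <= 3 / 2) by (intros; apply dl_prop; auto).
  assert (HZP : forall t, P (xt t) (yt t) = Zt t).
  { intros t. rewrite HP. unfold yt. field. pose proof (HWt t). lra_. }
  assert (Hdx : forall t, Dpl xt t (Zt t)).
  { intros t. unfold xt. eapply D_eq. D. apply HX. pose proof (Hut t). lra_.
    unfold Zt, xt. ring. }
  assert (Hdy : forall t, Dpl yt t (Q (xt t) (yt t))).
  { intros t. unfold yt, Zt. eapply D_eq. D. apply Hdx. apply Hdx. apply Hdp0. apply Hdx.
    pose proof (HWt t); lra_.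
    assert (En : (1 - k * xt t) ^ n = (1 - k * xt t) * (1 - k * xt t) ^ (pred n)).
    { destruct n as [|n']. exfalso; lia. reflexivity. }
    pose proof (HWt t) as HW. pose proof (Hxit t) as Hg. unfold xif, gfun in Hg. rewrite En in Hg.
    unfold Zt. rewrite HQ, En. apply alg; auto. lra_. apply pow_nonzero; lra_.
    apply Hcompat. apply dl_prop; auto. }
  assert (Hcs : forall t, cos (t + 2 * PI + phi) = cos (t + phi) /\ sin (t + 2 * PI + phi) = sin (t + phi)).
  { intros t. replace (t + 2 * PI + phi) with ((t + phi) + 2 * INR 1 * PI) by (simpl; ring).
    rewrite cos_period, sin_period. auto. }
  assert (Hper : forall t, xt (t + 2 * PI) = xt t /\ yt (t + 2 * PI) = yt t).
  { intros t. assert (E : xt (t + 2 * PI) = xt t) by (unfold xt; rewrite (proj1 (Hcs t)); reflexivity).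
    split; auto. unfold yt, Zt. rewrite E, (proj2 (Hcs t)). reflexivity. }
  assert (HA : forall t, 0 < xt t * cos (t + phi) + yt t * sin (t + phi)).
  { intros t. set (co := cos (t + phi)). set (si := sin (t + phi)).
    assert (Hcs2 : co ^ 2 + si ^ 2 = 1) by (unfold co, si; pose proof (sin2_cos2 (t + phi)); unfold Rsqr in H; lra).
    pose proof (Hut t) as Hw. fold co in Hw.
    destruct (X_lin (rho * co)) as [F1 F2]. lra_.
    fold co in Hxt. 
    assert (F2' : Rabs (xt t) <= 3 ^ n * rho).
    { unfold xt. fold co. eapply Rle_trans. apply F2. rewrite Rabs_mult, (Rabs_right rho) by lra_.
      assert (Rabs co <= 1) by (apply Rabs_le; apply COS_bound). pose proof (Rabs_pos co). apply Rmult_le_compat_l; [lra_|]. nra_. }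
    pose proof (HWt t) as HW. destruct (dl_prop _ (Hxt t)) as [Hd _].
    pose proof (Hp0b _ Hd) as F3.
    set (xv := xt t). fold xv in F2', HW, F3, Hd.
    set (Wn := (1 - k * xv) ^ n).
    assert (F4 : yt t = p0 xv / (1 - k * xv) + rho * si * Wn / (1 - k * xv)).
    { unfold yt, Zt. fold xv si Wn. field. lra_. }
    assert (F5 : / 3 ^ n <= Wn).
    { unfold Wn. rewrite <- pow_inv. apply pow_incr. split. left; apply Rinv_0_lt_compat; lra. lra_. }
    set (K := 3 ^ n). fold K in F1, F2', F5, hc4, HK.
    assert (a1 : rho * co ^ 2 / K <= xv * co).
    { apply (Rmult_le_reg_l rho). lra_. unfold xv, xt. fold co.
      replace (rho * (rho * co ^ 2 / K)) with (/ K * (rho * co) ^ 2) by (field; lra_). nra_. }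
    assert (a2 : - (2 * Kp * xv ^ 2) <= p0 xv / (1 - k * xv) * si).
    { assert (Rabs (p0 xv / (1 - k * xv) * si) <= 2 * Kp * xv ^ 2).
      { rewrite Rabs_mult. unfold Rdiv. rewrite Rabs_mult.
        rewrite (Rabs_right (/ (1 - k * xv))) by (left; apply Rinv_0_lt_compat; lra_).
        assert (Rabs si <= 1) by (apply Rabs_le; apply SIN_bound).
        assert (/ (1 - k * xv) <= 2) by (rewrite <- (Rinv_inv 2); apply Rinv_le_contravar; lra_).
        assert (0 <= / (1 - k * xv)) by (left; apply Rinv_0_lt_compat; lra_).
        pose proof (Rabs_pos (p0 xv)). pose proof (Rabs_pos si).
        assert (0 <= Kp * xv ^ 2) by (pose proof (pow2_ge_0 xv); nra_).
        apply Rle_trans with (Rabs (p0 xv) * 2 * 1). 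
        apply Rmult_le_compat. apply Rmult_le_pos; lra_. lra_. apply Rmult_le_compat_l; lra_. lra_. lra_. }
      unfold Rabs in H; destruct (Rcase_abs (p0 xv / (1 - k * xv) * si)); lra_. }
    assert (a3 : rho * si ^ 2 * (2 / 3) / K <= rho * si * Wn / (1 - k * xv) * si).
    { replace (rho * si * Wn / (1 - k * xv) * si) with (rho * si ^ 2 * (Wn / (1 - k * xv))) by (field; lra_).
      unfold Rdiv at 1. rewrite !Rmult_assoc. apply Rmult_le_compat_l. lra_. apply Rmult_le_compat_l. nra_.
      assert (2/3 <= / (1 - k * xv)) by (replace (2/3) with (/ (3/2)) by field; apply Rinv_le_contravar; lra_).
      assert (0 < / K) by (apply Rinv_0_lt_compat; lra_).
      unfold Rdiv. rewrite Rmult_comm. nra_. }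
    assert (a4 : xv ^ 2 <= K ^ 2 * rho ^ 2).
    { replace (xv ^ 2) with (Rabs xv ^ 2) by (rewrite <- !Rsqr_pow2; symmetry; apply Rsqr_abs).
      pose proof (Rabs_pos xv). nra_. }
    assert (a5 : 2 * Kp * K ^ 2 * rho ^ 2 <= rho / (2 * K)).
    { assert (4 * Kp * K ^ 3 * rho <= 1) by nra_.
      apply (Rmult_le_reg_l (2 * K)). lra_. replace (2 * K * (rho / (2 * K))) with rho by (field; lra_). nra_. }
    rewrite F4. rewrite Rmult_plus_distr_r.
    assert (0 < rho / K) by (apply Rdiv_lt_0_compat; lra_).
    assert (rho * co ^ 2 / K + rho * si ^ 2 * (2 / 3) / K >= (2/3) * (rho / K)).
    { replace (rho * co ^ 2 / K + rho * si ^ 2 * (2 / 3) / K) with ((rho / K) * (co ^ 2 + (2/3) * si ^ 2)) by (field; lra_).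
      nra_. }
    replace (rho / (2 * K)) with ((1/2) * (rho / K)) in a5 by (field; lra_).
    nra_. }
  assert (Hu0c : Rabs u0 < cc).
  { rewrite Hphi1. specialize (Hut 0). rewrite Rplus_0_l in Hut. exact Hut. }
  assert (Ex0 : xt 0 = x0).
  { unfold xt. rewrite Rplus_0_l, <- Hphi1. apply xi_inj; auto. apply X_small; auto.
    rewrite xiX by auto. reflexivity. }
  assert (EZ0 : Zt 0 = z0).
  { unfold Zt. rewrite Ex0, Rplus_0_l. fold W0. rewrite <- Ropp_mult_distr_l, <- Hphi2.
    unfold v0. field. apply pow_nonzero; lra_. }
  exists xt, yt. split.
  { intros t; split. rewrite HZP; apply Hdx. apply Hdy. }
  split. exact Ex0. split.
  { unfold yt. rewrite EZ0, Ex0. unfold z0. rewrite HP. field. lra_. }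
  split. exact Hper.
  split.
  { intros s Hs [E1 E2].
    assert (Hc : cos (s + phi) = cos phi).
    { apply (Rmult_eq_reg_l rho); [|lra_]. rewrite <- Hxit, E1, <- Hphi1. reflexivity. }
    assert (Hsn : sin (s + phi) = sin phi).
    { assert (E3 : Zt s = z0) by (rewrite <- HZP, E1, E2; reflexivity).
      rewrite <- EZ0 in E3. unfold Zt in E3. rewrite E1, Ex0, !Rplus_0_l in E3.
      apply (Rmult_eq_reg_l (- rho * (1 - k * x0) ^ n)).
      replace (- rho * (1 - k * x0) ^ n * sin (s + phi)) with (- rho * sin (s + phi) * (1 - k * x0) ^ n) by ring.
      rewrite E3. ring. apply Rmult_integral_contrapositive; split. lra_. apply pow_nonzero; lra_. }
    apply (cos_not1 s Hs). replace s with ((s + phi) - phi) by ring.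
    rewrite cos_minus, Hc, Hsn. pose proof (sin2_cos2 phi). unfold Rsqr in H. lra_. }
  split.
  { intros t. specialize (HA t). destruct (Req_dec (xt t) 0) as [h1|h1]; [|nra_].
    destruct (Req_dec (yt t) 0) as [h2|h2]; [|nra_]. rewrite h1, h2 in HA. lra_. }
  exists (fun t => (t + phi) + atan ((- xt t * sin (t + phi) + yt t * cos (t + phi)) /
                                   (xt t * cos (t + phi) + yt t * sin (t + phi)))).
  split.
  { intros t. eapply Dpl_cont. D. all: try apply Hdx. all: try apply Hdy. pose proof (HA t). lra_. }
  split.
  { intros t. apply polar_rel. apply HA. }
  destruct (Hper 0) as [P1 P2]. destruct (Hcs 0) as [C1 C2]. rewrite Rplus_0_l in P1, P2, C1, C2.
  rewrite Rplus_0_l in C1, C2. rewrite P1, P2, C1, C2, !Rplus_0_l. pose proof PI_RGT_0. lra_.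
Qed.

End WithX.

Theorem gen_main : isochronous_zero_urabe P Q.
Proof.
  split. destruct (Xex k n Hn) as [c0 [X [Hc0 [HX0 HX]]]]. exact (iso c0 X Hc0 HX0 HX). apply zu.
Qed.

End Gen.

Lemma powred (b c : R) : b ^ 2 = c -> forall j, b ^ (S (S j)) = c * b ^ j.
Proof. intros H j. simpl. rewrite <- H. simpl. ring. Qed.
Ltac inrs := cbn [Nat.pred] in *; repeat rewrite S_INR in *; rewrite ?INR_0 in *.
Ltac redb H := ring_simplify; repeat rewrite (powred _ _ H); field.

Lemma D_loc f g x l d : 0 < d -> (forall y, Rabs (y - x) < d -> f y = g y) -> Dpl g x l -> Dpl f x l.
Proof.
  intros Hd E H eps Heps. destruct (H eps Heps) as [del Hdel].
  assert (Hm : 0 < Rmin del d) by (apply Rmin_pos; [apply cond_pos|auto]).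
  exists (mkposreal _ Hm). intros h Hh Hh2. simpl in Hh2.
  rewrite !E. apply Hdel; auto. eapply Rlt_le_trans; [exact Hh2|apply Rmin_l].
  rewrite Rminus_diag, Rabs_R0; auto.
  replace (x + h - x) with h by ring. eapply Rlt_le_trans; [exact Hh2|apply Rmin_r].
Qed.

Lemma xi_from_h k m (n1 : nat) p0 q0 q1 h dh d0 :
  (1 <= n1)%nat -> (forall x, Rabs x < d0 -> 1 - k * x <> 0) ->
  (forall x, Rabs x < d0 -> gfun k m p0 q0 q1 x = (1 - k * x) * h x) ->
  (forall x, Dpl h x (dh x)) ->
  (forall x, dh x * (1 - k * x) + INR n1 * k * h x = 1) ->
  forall x, Rabs x < d0 -> Dpl (xif k m (S n1) p0 q0 q1) x (/ (1 - k * x) ^ (S n1)).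
Proof.
  intros Hn1 HW Hg Hdh Hid x Hx.
  apply (D_loc _ (fun y => h y / (1 - k * y) ^ n1) x _ (d0 - Rabs x)). lra.
  { intros y Hy. assert (Hy' : Rabs y < d0).
    { replace y with ((y - x) + x) by ring. eapply Rle_lt_trans. apply Rabs_triang. lra. }
    unfold xif. rewrite Hg by auto. simpl. field. split. apply pow_nonzero. auto. auto. }
  assert (En : (1 - k * x) ^ n1 = (1 - k * x) * (1 - k * x) ^ (pred n1)).
  { destruct n1 as [|n']. exfalso; lia. reflexivity. }
  pose proof (HW x Hx).
  eapply D_eq. D. apply Hdh. apply pow_nonzero; auto.
  simpl. rewrite En. specialize (Hid x).
  assert ((1 - k * x) ^ pred n1 <> 0) by (apply pow_nonzero; auto).
  set (Wp := (1 - k * x) ^ pred n1) in *. set (W := 1 - k * x) in *.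
  replace (dh x * 1 * (W * Wp) - INR n1 * Wp * (0 - (0 * x + k * 1)) * h x) with
    (Wp * (dh x * W + INR n1 * k * h x)) by ring.
  rewrite Hid. field. split; auto.
Qed.

Lemma small_k k x : Rabs x < / (Rabs k + 1) -> Rabs (k * x) < 1.
Proof.
  intros H. rewrite Rabs_mult. pose proof (Rabs_pos k). pose proof (Rabs_pos x).
  apply (Rmult_lt_compat_l (Rabs k + 1)) in H; [|lra]. rewrite Rinv_r in H by lra. nra.
Qed.

Lemma small_k' k x : Rabs x < / (Rabs k + 1) -> 1 - k * x <> 0 /\ Rabs (1 - k * x) <= 2.
Proof.
  intros H. pose proof (small_k k x H). unfold Rabs in *. destruct (Rcase_abs (k * x)), (Rcase_abs (1 - k * x)); split; lra.
Qed.

Lemma compat_help a b d e c : c <> 0 -> - a + (b + d) * c - e = 0 -> - a / c + b + d - e / c = 0.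
Proof. intros Hc H. replace (- a / c + b + d - e / c) with ((- a + (b + d) * c - e) / c) by (field; auto).
  rewrite H. unfold Rdiv; ring. Qed.

Lemma g_help a b e c d : c <> 0 -> a + (b - e) * c = d * c -> a / c + b - e = d.
Proof. intros Hc H. apply (Rmult_eq_reg_r c); auto. rewrite <- H. field. auto. Qed.

Lemma p0_bound x c : Rabs c <= 2 -> Rabs (x ^ 2 * c) <= 2 * x ^ 2.
Proof. intros H. rewrite Rabs_mult. rewrite (Rabs_right (x^2)) by (apply Rle_ge, pow2_ge_0).
  pose proof (pow2_ge_0 x). nra. Qed.

Lemma sys1 a : isochronous_zero_urabe (P1 a) (Q1 a).
Proof.
  assert (Hd : 0 < / (Rabs a + 1)) by (apply Rinv_0_lt_compat; pose proof (Rabs_pos a); lra).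
  apply (gen_main (P1 a) (Q1 a) a (4 * a) 5 (fun x => x ^ 2 - a * x ^ 3) (fun x => 2 * x - 3 * a * x ^ 2)
    (fun x => x - 3 / 2 * a * x ^ 2 + (2 + a ^ 2) * x ^ 3 + (2 * a - 1 / 4 * a ^ 3) * x ^ 4)
    (fun x => - 2 * x - 6 * a * x ^ 2) 2 (/ (Rabs a + 1))).
  - lia.
  - inrs. field.
  - intros; unfold P1; field.
  - intros; unfold Q1; field.
  - intros x. eapply D_eq. D. inrs; field.
  - field.
  - field.
  - auto.
  - lra.
  - intros x Hx. destruct (small_k' a x Hx) as [HW _]. apply compat_help. lra. field.
  - intros x Hx. destruct (small_k' a x Hx) as [_ HW].
    replace (x ^ 2 - a * x ^ 3) with (x ^ 2 * (1 - a * x)) by field. apply p0_bound; auto.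
  - apply (xi_from_h a (4 * a) 4 _ _ _ (fun x => x - 3 / 2 * a * x ^ 2 + a ^ 2 * x ^ 3 - 1 / 4 * a ^ 3 * x ^ 4)
      (fun x => (1 - a * x) ^ 3) (/ (Rabs a + 1))).
    + lia.
    + intros x Hx. apply (small_k' a x Hx).
    + intros x Hx. destruct (small_k' a x Hx) as [HW _]. unfold gfun. apply g_help. lra. field.
    + intros x. eapply D_eq. D. inrs; field.
    + intros x. inrs. field.
Qed.

Lemma sys2 a : isochronous_zero_urabe (P2 a) (Q2 a).
Proof.
  assert (Hd : 0 < / (Rabs a + 1)) by (apply Rinv_0_lt_compat; pose proof (Rabs_pos a); lra).
  apply (gen_main (P2 a) (Q2 a) a (3 * a) 4 (fun x => x ^ 2 - a * x ^ 3) (fun x => 2 * x - 3 * a * x ^ 2)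
    (fun x => x - a * x ^ 2 + (1 / 3 * a ^ 2 + 2) * x ^ 3 + a * x ^ 4)
    (fun x => - 2 * x - 4 * a * x ^ 2) 2 (/ (Rabs a + 1))).
  - lia.
  - inrs. field.
  - intros; unfold P2; field.
  - intros; unfold Q2; field.
  - intros x. eapply D_eq. D. inrs; field.
  - field.
  - field.
  - auto.
  - lra.
  - intros x Hx. destruct (small_k' a x Hx) as [HW _]. apply compat_help. lra. field.
  - intros x Hx. destruct (small_k' a x Hx) as [_ HW].
    replace (x ^ 2 - a * x ^ 3) with (x ^ 2 * (1 - a * x)) by field. apply p0_bound; auto.
  - apply (xi_from_h a (3 * a) 3 _ _ _ (fun x => x - a * x ^ 2 + 1 / 3 * a ^ 2 * x ^ 3)
      (fun x => (1 - a * x) ^ 2) (/ (Rabs a + 1))).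
    + lia.
    + intros x Hx. apply (small_k' a x Hx).
    + intros x Hx. destruct (small_k' a x Hx) as [HW _]. unfold gfun. apply g_help. lra. field.
    + intros x. eapply D_eq. D. inrs; field.
    + intros x. inrs. field.
Qed.

Lemma sys3 b : (b = sqrt 3 \/ b = - sqrt 3) -> isochronous_zero_urabe (P3 b) (Q3 b).
Proof.
  intros Hb. assert (Hb2 : b ^ 2 = 3).
  { destruct Hb as [-> | ->]. rewrite <- Rsqr_pow2, Rsqr_sqrt; lra.
    rewrite <- Rsqr_pow2, <- Rsqr_neg, Rsqr_sqrt; lra. }
  assert (Hd : 0 < / (Rabs (2 * b) + 1)) by (apply Rinv_0_lt_compat; pose proof (Rabs_pos (2 * b)); lra).
  apply (gen_main (P3 b) (Q3 b) (2 * b) (8 * b) 5 (fun x => x ^ 2 - 2 * b * x ^ 3) (fun x => 2 * x - 6 * b * x ^ 2)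
    (fun x => x - 3 * b * x ^ 2 + 14 * x ^ 3 - 2 * b * x ^ 4)
    (fun x => - 2 * x - 12 * b * x ^ 2) 2 (/ (Rabs (2 * b) + 1))).
  - lia.
  - inrs. field.
  - intros; unfold P3; field.
  - intros; unfold Q3; field.
  - intros x. eapply D_eq. D. inrs; field.
  - field.
  - field.
  - auto.
  - lra.
  - intros x Hx. destruct (small_k' (2 * b) x Hx) as [HW _]. apply compat_help. lra. field.
  - intros x Hx. destruct (small_k' (2 * b) x Hx) as [_ HW].
    replace (x ^ 2 - 2 * b * x ^ 3) with (x ^ 2 * (1 - 2 * b * x)) by field. apply p0_bound; auto.
  - apply (xi_from_h (2 * b) (8 * b) 4 _ _ _ (fun x => x - 3 * b * x ^ 2 + 12 * x ^ 3 - 6 * b * x ^ 4)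
      (fun x => 1 - 6 * b * x + 36 * x ^ 2 - 24 * b * x ^ 3) (/ (Rabs (2 * b) + 1))).
    + lia.
    + intros x Hx. apply (small_k' (2 * b) x Hx).
    + intros x Hx. destruct (small_k' (2 * b) x Hx) as [HW _]. unfold gfun. apply g_help. lra. redb Hb2.
    + intros x. eapply D_eq. D. inrs; field.
    + intros x. inrs. redb Hb2.
Qed.

Lemma alpha_small al x : al ^ 2 = 2 -> Rabs x < /4 -> -3/8 <= al * x <= 3/8 /\ 0 <= x ^ 2 <= 1/16.
Proof.
  intros Ha Hx. assert (-3/2 <= al <= 3/2) by nra. apply Rabs_def2 in Hx.
  split; [split|split]; nra.
Qed.

Lemma sys4 al : (al = sqrt 2 \/ al = - sqrt 2) -> isochronous_zero_urabe (P4 al) (Q4 al).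
Proof.
  intros Ha. assert (Ha2 : al ^ 2 = 2).
  { destruct Ha as [-> | ->]. rewrite <- Rsqr_pow2, Rsqr_sqrt; lra.
    rewrite <- Rsqr_pow2, <- Rsqr_neg, Rsqr_sqrt; lra. }
  apply (gen_main (P4 al) (Q4 al) al (6 * al) 7 (fun x => x ^ 2 - 4 / 3 * al * x ^ 3 + 2 / 3 * x ^ 4)
    (fun x => 2 * x - 4 * al * x ^ 2 + 8 / 3 * x ^ 3)
    (fun x => x - 5 / 2 * al * x ^ 2 + 26 / 3 * x ^ 3 - 8 / 3 * al * x ^ 4)
    (fun x => - 2 * x - 9 * al * x ^ 2 + 6 * x ^ 3) 2 (/ 4)).
  - lia.
  - inrs. field.
  - intros; unfold P4; field.
  - intros; unfold Q4; field.
  - intros x. eapply D_eq. D. inrs; field.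
  - field.
  - field.
  - lra.
  - lra.
  - intros x Hx. destruct (alpha_small al x Ha2 Hx). apply compat_help. lra. redb Ha2.
  - intros x Hx. destruct (alpha_small al x Ha2 Hx).
    replace (x ^ 2 - 4 / 3 * al * x ^ 3 + 2 / 3 * x ^ 4) with (x ^ 2 * (1 - 4 / 3 * (al * x) + 2 / 3 * x ^ 2)) by field.
    apply p0_bound. apply Rabs_le. split; lra.
  - apply (xi_from_h al (6 * al) 6 _ _ _
      (fun x => x - 5 / 2 * al * x ^ 2 + 10 / 3 * al ^ 2 * x ^ 3 - 5 / 2 * al ^ 3 * x ^ 4 + al ^ 4 * x ^ 5 - 1 / 6 * al ^ 5 * x ^ 6)
      (fun x => (1 - al * x) ^ 5) (/ 4)).
    + lia.
    + intros x Hx. destruct (alpha_small al x Ha2 Hx). lra.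
    + intros x Hx. destruct (alpha_small al x Ha2 Hx). unfold gfun. apply g_help. lra. redb Ha2.
    + intros x. eapply D_eq. D. inrs; field.
    + intros x. inrs. field.
Qed.

Lemma sys5 al : (al = sqrt 2 \/ al = - sqrt 2) -> isochronous_zero_urabe (P5 al) (Q5 al).
Proof.
  intros Ha. assert (Ha2 : al ^ 2 = 2).
  { destruct Ha as [-> | ->]. rewrite <- Rsqr_pow2, Rsqr_sqrt; lra.
    rewrite <- Rsqr_pow2, <- Rsqr_neg, Rsqr_sqrt; lra. }
  apply (gen_main (P5 al) (Q5 al) al (3 * al) 4 (fun x => x ^ 2 - 4 / 3 * al * x ^ 3 + 2 / 3 * x ^ 4)
    (fun x => 2 * x - 4 * al * x ^ 2 + 8 / 3 * x ^ 3)
    (fun x => x - al * x ^ 2 + 8 / 3 * x ^ 3 - 2 / 3 * al * x ^ 4)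
    (fun x => - 2 * x - 3 * al * x ^ 2 + 2 * x ^ 3) 2 (/ 4)).
  - lia.
  - inrs. field.
  - intros; unfold P5; field.
  - intros; unfold Q5; field.
  - intros x. eapply D_eq. D. inrs; field.
  - field.
  - field.
  - lra.
  - lra.
  - intros x Hx. destruct (alpha_small al x Ha2 Hx). apply compat_help. lra. redb Ha2.
  - intros x Hx. destruct (alpha_small al x Ha2 Hx).
    replace (x ^ 2 - 4 / 3 * al * x ^ 3 + 2 / 3 * x ^ 4) with (x ^ 2 * (1 - 4 / 3 * (al * x) + 2 / 3 * x ^ 2)) by field.
    apply p0_bound. apply Rabs_le. split; lra.
  - apply (xi_from_h al (3 * al) 3 _ _ _
      (fun x => x - al * x ^ 2 + 1 / 3 * al ^ 2 * x ^ 3)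
      (fun x => (1 - al * x) ^ 2) (/ 4)).
    + lia.
    + intros x Hx. destruct (alpha_small al x Ha2 Hx). lra.
    + intros x Hx. destruct (alpha_small al x Ha2 Hx). unfold gfun. apply g_help. lra. redb Ha2.
    + intros x. eapply D_eq. D. inrs; field.
    + intros x. inrs. field.
Qed.

Theorem theorem4p2 :
  (forall a : R, isochronous_zero_urabe (P1 a) (Q1 a)) /\
  (forall a : R, isochronous_zero_urabe (P2 a) (Q2 a)) /\
  (forall b : R, (b = sqrt 3 \/ b = - sqrt 3) -> isochronous_zero_urabe (P3 b) (Q3 b)) /\
  (forall al : R, (al = sqrt 2 \/ al = - sqrt 2) -> isochronous_zero_urabe (P4 al) (Q4 al)) /\
  (forall al : R, (al = sqrt 2 \/ al = - sqrt 2) -> isochronous_zero_urabe (P5 al) (Q5 al)).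
Proof.
  split. exact sys1. split. exact sys2. split. exact sys3. split. exact sys4. exact sys5.
Qed.
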